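(* Let $\Gamma(t,s)=\int_{\mathbb{R}}e^{-\rho(\alpha,(s,t])}\mu(\mathrm{d}\alpha)$ be a completely monotone double kernel in which every measure $\rho(\alpha,\cdot)$ is atomless. If $\Gamma$ satisfies condition (K), then it satisfies Assumption (A) with the approximating family $\Gamma_M(t,s)=\int_{[-M,M]}e^{-\rho(\alpha,(s,t])}\mu(\mathrm{d}\alpha)$, $M\in\mathbb{N}^*$.
   Context: Completely monotone double kernel: $\mu$ is a Borel measure on $\mathbb{R}$ finite on compact sets; $(\rho(\alpha,\cdot))_{\alpha\in\mathbb{R}}$ Borel measures on $\mathbb{R}_+$ finite on compact sets with $\rho(\beta,\cdot)-\rho(\alpha,\cdot)\ge0$ for $\alpha\le\beta$; $\Gamma(t,s)<\infty$ for $t>s$; defined for $0<s<t$. Notation $\Delta=\{(t,s):0\le s\le t\}$, $\Delta_T=\{(t,s):0\le s\le t\le T\}$. Condition (K): for every $T$ there exist $\eta>0$, $\gamma\in(0,1/2]$ with $\int_s^t\Gamma(t,u)^2\mathrm{d}u+\int_0^s(\Gamma(t,u)-\Gamma(s,u))^2\mathrm{d}u\le\eta(t-s)^{2\gamma}$ on $\Delta_T$. $\Gamma$ preserves nonnegativity if for every $T>0$, $K$, $x_1,\dots,x_K\in\mathbb{R}$, $0\le t_1<\dots<t_K<T$ with $\sum_{k'\le k}x_{k'}\Gamma(t_k,t_{k'})\ge0$ for all $k$, one has $\sum_{k:t_k\le t}x_k\Gamma(t,t_k)\ge0$ for $t\in[0,T]$. Condition (P): continuous on $\Delta$, $0<\Gamma(s,s)<\infty$,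 preserves nonnegativity, $t\mapsto\Gamma(t,s)$ nonincreasing on $[s,\infty)$. Assumption (A): (K) holds and there are kernels $\Gamma_M$ satisfying (P) with $\int_0^t(\Gamma(t,s)-\Gamma_M(t,s))^2\mathrm{d}s\to0$ for all $t\ge0$ and, for each $T$, constants $\eta>0,\gamma\in(0,1/2]$ with $\int_s^t\Gamma_M(t,u)^2\mathrm{d}u+\int_0^s(\Gamma_M(t,u)-\Gamma_M(s,u))^2\mathrm{d}u\le\eta|t-s|^{2\gamma}$ on $\Delta_T$ for all $M$. *)

(* Defs.v *)
From HB Require Import structures.
From mathcomp Require Import all_boot all_order all_algebra.
From mathcomp Require Import all_classical all_reals all_analysis.
Set Implicit Arguments. Unset Strict Implicit. Unset Printing Implicit Defensive.
Import Order.TTheory GRing.Theory Num.Theory.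
Import numFieldNormedType.Exports.
Local Open Scope classical_set_scope.
Local Open Scope ring_scope.

Section defs.
Variable R : realType.
Local Notation leb := (@lebesgue_measure R).

Definition kernel := R -> R -> \bar R.

(* Completely monotone double kernel data: mu Borel measure on R finite on
   compacts; rho a measure on R_+ (represented as a measure on R giving no
   mass to ]-oo,0[), finite on compacts, nondecreasing in alpha (as measures);
   Gamma(t,s) finite for 0 <= s < t. *)
Definition Gamma (mu : {measure set R -> \bar R})
  (rho : R -> {measure set R -> \bar R}) : kernel :=
  fun t s => (\int[mu]_a expeR (- rho a `]s, t]%classic))%E.

Definition GammaM (mu : {measure set R -> \bar R})
  (rho : R -> {measure set R -> \bar R}) (M : nat) : kernel :=
  fun t s => (\int[mu]_(a in `[(- (M%:R : R))%R, (M%:R : R)]%classic) expeR (- rho a `]s, t]%classic))%E.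

Definition cm_double_kernel (mu : {measure set R -> \bar R})
  (rho : R -> {measure set R -> \bar R}) : Prop :=
  [/\ (forall a b : R, (mu `[a, b]%classic < +oo)%E),
      (forall a, rho a `]-oo, 0[%classic = 0%E),
      (forall a x y : R, (rho a `[x, y]%classic < +oo)%E),
      (forall a b : R, a <= b -> forall A, measurable A -> (rho a A <= rho b A)%E)
    & (forall t s : R, 0 <= s < t -> (Gamma mu rho t s < +oo)%E)].

Definition Delta : set (R * R) := [set p | 0 <= p.2 <= p.1].

Definition Kquant (G : kernel) (t s : R) : \bar R :=
  (\int[leb]_(u in (`[s, t[%classic : set R)) (G t u) ^+ 2
   + \int[leb]_(u in (`[0%R, s[%classic : set R)) (G t u - G s u) ^+ 2)%E.

Definition condK (G : kernel) : Prop :=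
  forall T : R, exists eta : R, exists gam : R,
    [/\ 0 < eta, 0 < gam, gam <= 1/2 &
      forall t s, 0 <= s -> s <= t -> t <= T ->
        (Kquant G t s <= (eta * (t - s) `^ (2 * gam))%:E)%E].

Definition preserves_nonnegativity (G : kernel) : Prop :=
  forall (T : R) (K : nat) (x tt : nat -> R), 0 < T ->
    (forall k, (k < K)%N -> 0 <= tt k /\ tt k < T) ->
    (forall i j, (i < j)%N -> (j < K)%N -> tt i < tt j) ->
    (forall k, (k < K)%N ->
       (0 <= \sum_(0 <= k' < k.+1) (x k')%:E * G (tt k) (tt k'))%E) ->
    forall u, 0 <= u <= T ->
       (0 <= \sum_(0 <= k < K | (tt k <= u)%R) (x k)%:E * G u (tt k))%E.

Definition condP (G : kernel) : Prop :=
  [/\ {within Delta, continuous (fun p : R * R => G p.1 p.2)},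
      (forall s, 0 <= s -> (0 < G s s)%E /\ (G s s < +oo)%E),
      preserves_nonnegativity G &
      (forall s t1 t2, 0 <= s -> s <= t1 -> t1 <= t2 -> (G t2 s <= G t1 s)%E)].

End defs.

(* Main.v *)
Require Import Defs.
From HB Require Import structures.
From mathcomp Require Import all_boot all_order all_algebra.
From mathcomp Require Import all_classical all_reals all_analysis.
From mathcomp Require Import measurable_realfun.
From mathcomp.algebra_tactics Require Import ring lra.
Import Order.TTheory GRing.Theory Num.Theory.
Import numFieldNormedType.Exports.
Local Open Scope classical_set_scope.
Local Open Scope ring_scope.
Set Implicit Arguments. Unset Strict Implicit. Unset Printing Implicit Defensive.

Section Basic.
Variable R : realType.
Variable rho : R -> {measure set R -> \bar R}.
Hypothesis rho_fin : forall a x y : R, (rho a `[x, y]%classic < +oo)%E.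
Hypothesis rho_mono : forall a b : R, a <= b -> forall A, measurable A -> (rho a A <= rho b A)%E.

Definition rr a s t := fine (rho a `]s, t]%classic).
Definition ee a s t := expR (- rr a s t).

Lemma rho_oc_fin a s t : rho a `]s, t]%classic \is a fin_num.
Proof.
rewrite ge0_fin_numE ?measure_ge0 //.
apply: (le_lt_trans _ (rho_fin a s t)); apply: le_measure; rewrite ?inE //.
by apply: subset_itv; rewrite bnd_simp.
Qed.

Lemma rhoE a s t : rho a `]s, t]%classic = (rr a s t)%:E.
Proof. by rewrite /rr fineK // rho_oc_fin. Qed.

Lemma rr_ge0 a s t : 0 <= rr a s t.
Proof. by rewrite /rr fine_ge0 // measure_ge0. Qed.

Lemma expeE a s t : expeR (- rho a `]s, t]%classic) = (ee a s t)%:E.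
Proof. by rewrite rhoE. Qed.

Lemma ee_gt0 a s t : 0 < ee a s t.
Proof. exact: expR_gt0. Qed.

Lemma ee_le1 a s t : ee a s t <= 1.
Proof. by rewrite /ee -expR0 ler_expR lerNl oppr0 rr_ge0. Qed.

Lemma rr_monoa a b s t : a <= b -> rr a s t <= rr b s t.
Proof. by move=> ab; rewrite -lee_fin -!rhoE rho_mono. Qed.

Lemma ee_monoa a b s t : a <= b -> ee b s t <= ee a s t.
Proof. by move=> ab; rewrite /ee ler_expR lerN2 rr_monoa. Qed.

Lemma rr_subset a s t s' t' : `]s, t]%classic `<=` `]s', t']%classic -> rr a s t <= rr a s' t'.
Proof. by move=> st; rewrite -lee_fin -!rhoE le_measure // inE. Qed.

Lemma rr_refl a s : rr a s s = 0.
Proof. by rewrite /rr set_itvoc0 measure0. Qed.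

Lemma ee_refl a s : ee a s s = 1.
Proof. by rewrite /ee rr_refl oppr0 expR0. Qed.

Lemma rr_add a s m t : s <= m -> m <= t -> rr a s t = rr a s m + rr a m t.
Proof.
move=> sm mt; apply/EFin_inj; rewrite EFinD -!rhoE.
rewrite -measureU //; last first.
  rewrite -subset0 => x [] /=; rewrite !in_itv /= => /andP[_ xm] /andP[mx _].
  by move: (lt_le_trans mx xm); rewrite ltxx.
congr (rho a _); rewrite !set_itvoc; apply/seteqP; split => x /=.
  by move=> /andP[sx xt]; have [xm|mx] := leP x m; [left|right]; rewrite /= ?sx ?xm ?mx ?xt.
case=> /= /andP[h1 h2]; apply/andP; split => //.
- exact: le_trans h2 mt.
- exact: le_lt_trans sm h1.
Qed.

Lemma ee_mul a s m t : s <= m -> m <= t -> ee a s t = ee a s m * ee a m t.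
Proof. by move=> sm mt; rewrite /ee (rr_add a sm mt) opprD expRD. Qed.

Lemma ee_mono_s a s1 s2 t : s1 <= s2 -> ee a s1 t <= ee a s2 t.
Proof.
move=> s12; rewrite /ee ler_expR lerN2; apply: rr_subset.
by apply: subset_itv; rewrite bnd_simp.
Qed.

Lemma ee_anti_t a s t1 t2 : t1 <= t2 -> ee a s t2 <= ee a s t1.
Proof.
move=> t12; rewrite /ee ler_expR lerN2; apply: rr_subset.
by apply: subset_itv; rewrite bnd_simp.
Qed.

Lemma ee_nonincr s t : nonincreasing_fun (fun a => ee a s t).
Proof. by move=> a b ab; exact: ee_monoa. Qed.

Lemma ee_measurable D s t : measurable D -> measurable_fun D (fun a => ee a s t).
Proof. by move=> mD; apply: nonincreasing_measurable => //; exact: ee_nonincr. Qed.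

End Basic.
Section Good.
Variable R : realType.
Variable mu : {measure set R -> \bar R}.
Variable D : set R.
Hypothesis mD : measurable D.
Hypothesis muDfin : (mu D < +oo)%E.

Definition gd (f : R -> R) := measurable_fun D f /\ exists C, forall a, D a -> `|f a| <= C.

Lemma gd_int f : gd f -> mu.-integrable D (EFin \o f).
Proof.
move=> [mf [C hC]]; apply: measurable_bounded_integrable => //.
exists C; split; first exact: num_real.
by move=> y Cy a Da; apply: le_trans (hC a Da) _; exact: ltW.
Qed.

Lemma gd_cst c : gd (fun _ => c).
Proof. by split; [exact: measurable_cst | exists `|c|]. Qed.

Lemma gd_add f g : gd f -> gd g -> gd (fun a => f a + g a).
Proof.
move=> [mf [C hC]] [mg [C' hC']]; split; first exact: measurable_funD.
exists (C + C') => a Da; apply: le_trans (ler_normD _ _) _.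
by apply: lerD; [exact: hC|exact: hC'].
Qed.

Lemma gd_mul f g : gd f -> gd g -> gd (fun a => f a * g a).
Proof.
move=> [mf [C hC]] [mg [C' hC']]; split; first exact: measurable_funM.
exists (C * C') => a Da; rewrite normrM; apply: ler_pM => //.
- exact: hC.
- exact: hC'.
Qed.

Lemma gd_sum (n : nat) (h : nat -> R -> R) : (forall i, gd (h i)) ->
  gd (fun a => \sum_(0 <= i < n) h i a).
Proof.
move=> hh; elim: n => [|n IH].
  by under [X in gd X]funext do rewrite big_geq//; exact: gd_cst.
under [X in gd X]funext do rewrite big_nat_recr//=.
exact: gd_add.
Qed.

Local Notation Rint f := (\int[mu]_(a in D) f a).

Lemma Rint_add f g : gd f -> gd g -> Rint (fun a => f a + g a) = Rint f + Rint g.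
Proof. by move=> hf hg; rewrite RintegralD //; exact: gd_int. Qed.

Lemma Rint_scale c f : gd f -> Rint (fun a => c * f a) = c * Rint f.
Proof. by move=> hf; rewrite RintegralZl //; exact: gd_int. Qed.

Lemma Rint_le f g : gd f -> gd g -> (forall a, D a -> f a <= g a) -> Rint f <= Rint g.
Proof. by move=> hf hg fg; apply: le_Rintegral => //; exact: gd_int. Qed.

Lemma Rint_sum (n : nat) (h : nat -> R -> R) : (forall i, gd (h i)) ->
  Rint (fun a => \sum_(0 <= i < n) h i a) = \sum_(0 <= i < n) Rint (h i).
Proof.
move=> hh; elim: n => [|n IH].
  under eq_Rintegral do rewrite big_geq//.
  by rewrite big_geq// Rintegral_cst // mul0r.
under eq_Rintegral do rewrite big_nat_recr//=.
by rewrite Rint_add ?IH ?big_nat_recr //; exact: gd_sum.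
Qed.

Lemma Rint_cst c : Rint (fun _ => c) = c * fine (mu D).
Proof. by rewrite Rintegral_cst. Qed.

Lemma Rint_EFin f : gd f -> (\int[mu]_(a in D) (f a)%:E)%E = (Rint f)%:E.
Proof.
move=> hf; rewrite /Rintegral fineK //; apply: integrable_fin_num => //.
exact: gd_int.
Qed.

Definition UU (g : R -> R) := forall a b, a < b -> 0 < g b -> g b <= g a.

Lemma lam_lemma (g w : R -> R) : gd g -> gd w -> UU g ->
  (forall a b, a <= b -> w b <= w a) -> (forall a, 0 <= w a <= 1) ->
  0 <= Rint g -> 0 <= Rint (fun a => w a * g a).
Proof.
move=> gg gw Ug hw w01 Ig.
have [lam [l0 hl]] : exists lam, 0 <= lam /\ forall a, lam * g a <= w a * g a.
  case: (pselect (exists a, 0 < g a)).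
  - move=> [a0 ga0]; set S := [set w a | a in [set a | 0 < g a]].
    have hlb : has_lbound S by exists 0 => y [a _ <-]; case/andP: (w01 a).
    have ne : S !=set0 by exists (w a0); exists a0.
    exists (inf S); split.
      by apply: lb_le_inf ne _ => y [a _ <-]; case/andP: (w01 a).
    move=> a; have [ga|ga] := ltP 0 (g a).
      by apply: ler_wpM2r; [exact: ltW|by apply: (ge_inf hlb); exists a].
    apply: ler_wnM2r => //; apply: lb_le_inf ne _ => y [b gb <-].
    apply: hw; rewrite leNgt; apply/negP => ab.
    by move: (Ug _ _ ab gb) => /(lt_le_trans gb); rewrite ltNge ga.
  - move=> hn; exists 1; split => // a; apply: ler_wnM2r.
      by rewrite leNgt; apply/negP => h; apply: hn; exists a.
    by case/andP: (w01 a).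
apply: le_trans (_ : Rint (fun a => lam * g a) <= _).
  by rewrite Rint_scale // mulr_ge0.
apply: Rint_le; first exact: gd_mul (gd_cst _) gg; first exact: gd_mul.
by move=> a _; exact: hl.
Qed.

End Good.

Lemma arith3 (R : realType) (A P Q : R) : 0 <= A - P -> 0 <= P + Q -> 0 <= A + Q.
Proof. lra. Qed.

Section Induct.
Variable R : realType.
Variable mu : {measure set R -> \bar R}.
Variable D : set R.
Hypothesis mD : measurable D.
Hypothesis muDfin : (mu D < +oo)%E.
Hypothesis muD0 : (0 < mu D)%E.
Variable rho : R -> {measure set R -> \bar R}.
Hypothesis rho_fin : forall a x y : R, (rho a `[x, y]%classic < +oo)%E.
Hypothesis rho_mono : forall a b : R, a <= b -> forall A, measurable A -> (rho a A <= rho b A)%E.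

Local Notation Rint f := (\int[mu]_(a in D) f a).
Local Notation e := (ee rho).

Lemma gd_ee s t : gd D (fun a => e a s t).
Proof.
split; first exact: ee_measurable.
by exists 1 => a _; rewrite ger0_norm ?ee_le1 // ltW // ee_gt0.
Qed.

Variables (K : nat) (x tt : nat -> R).
Hypothesis tt_incr : forall i j, (i < j)%N -> (j < K)%N -> tt i < tt j.

Definition FF k a := \sum_(0 <= j < k.+1) x j * e a (tt j) (tt k).
Hypothesis HK : forall k, (k < K)%N -> 0 <= Rint (FF k).

Lemma gd_FF k : gd D (FF k).
Proof. by apply: gd_sum => i; apply: gd_mul (gd_cst _ _) _; exact: gd_ee. Qed.

Lemma FF0 a : FF 0 a = x 0.
Proof. by rewrite /FF big_nat1 ee_refl mulr1. Qed.

Lemma tt_le i j : (i <= j)%N -> (j < K)%N -> tt i <= tt j.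
Proof.
rewrite leq_eqVlt => /orP[/eqP -> //|ij jK].
exact/ltW/tt_incr.
Qed.

Lemma FF_rec k a : (k.+1 < K)%N ->
  FF k.+1 a = e a (tt k) (tt k.+1) * FF k a + x k.+1.
Proof.
move=> kK; rewrite /FF big_nat_recr //= ee_refl mulr1; congr (_ + _).
rewrite mulr_sumr; apply: eq_big_nat => j /andP[_ jk].
rewrite (ee_mul rho_fin a (s := tt j) (m := tt k)).
- ring.
- by apply: tt_le => //; apply: ltn_trans kK.
- by apply/ltW/tt_incr.
Qed.

Lemma QQ k : (k < K)%N -> forall v, gd D v -> UU v -> 0 <= Rint v ->
  0 <= Rint (fun a => v a * FF k a).
Proof.
elim: k => [|k IH] kK v gv Uv Iv.
  have x0 : 0 <= x 0.
    have := HK kK; under eq_Rintegral do rewrite FF0.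
    rewrite Rint_cst // pmulr_lge0 //.
    by rewrite fine_gt0 // muD0 muDfin.
  under eq_Rintegral do rewrite FF0 mulrC.
  by rewrite Rint_scale // mulr_ge0.
have kK' : (k < K)%N by apply: ltn_trans kK.
set w := fun a => e a (tt k) (tt k.+1).
set mD' := fine (mu D).
have mD'0 : 0 < mD' by rewrite fine_gt0 // muD0 muDfin.
set c := Rint v / mD'.
have c0 : 0 <= c by rewrite divr_ge0 // ltW.
have gw : gd D w by exact: gd_ee.
have gF := gd_FF k.
have E1 : Rint (fun a => v a * FF k.+1 a) =
    Rint (fun a => v a * w a * FF k a) + x k.+1 * Rint v.
  under eq_Rintegral do rewrite FF_rec // mulrDr mulrA (mulrC (v _) (x _)).
  rewrite Rint_add ?Rint_scale //; last exact: gd_mul (gd_cst _ _) gv.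
  by apply: gd_mul => //; exact: gd_mul.
have E2 : Rint (FF k.+1) = Rint (fun a => w a * FF k a) + x k.+1 * mD'.
  under eq_Rintegral do rewrite FF_rec //.
  by rewrite Rint_add ?Rint_cst //; [exact: gd_mul|exact: gd_cst].
have H2 := HK kK; rewrite E2 in H2.
have Ev : Rint v = c * mD' by rewrite /c divfK // gt_eqF.
set v' := fun a => w a * (v a - c).
have gv' : gd D v' by apply: gd_mul => //; apply: gd_add => //; exact: gd_cst.
have Uv' : UU v'.
  move=> a b ab; rewrite /v' => h.
  have vb : 0 < v b - c.
    by move: h; rewrite pmulr_rgt0 // ee_gt0.
  apply: ler_pM => //; first exact/ltW/ee_gt0.
  - exact: ltW.
  - exact/ee_monoa/ltW.
  - by rewrite lerD2r; apply: Uv => //; apply: lt_le_trans vb _; rewrite gerDl oppr_le0.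
have Iv' : 0 <= Rint v'.
  apply: lam_lemma => //.
  - by apply: gd_add => //; exact: gd_cst.
  - move=> a b ab h; rewrite lerD2r; apply: Uv => //.
    by apply: lt_le_trans h _; rewrite gerDl oppr_le0.
  - by move=> a b ab; exact: ee_monoa.
  - by move=> a; rewrite ee_le1 ltW // ee_gt0.
  - rewrite Rint_add //; last exact: gd_cst.
    by rewrite Rint_cst // -/mD' Ev mulNr addrN.
have := IH kK' v' gv' Uv' Iv'.
have E3 : Rint (fun a => v' a * FF k a) =
    Rint (fun a => v a * w a * FF k a) - c * Rint (fun a => w a * FF k a).
  rewrite -mulNr -Rint_scale //; last exact: gd_mul.
  rewrite -Rint_add //; last 2 first.
  - by apply: gd_mul => //; exact: gd_mul.
  - by apply: gd_mul (gd_cst _ _) _; exact: gd_mul.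
  by apply: eq_Rintegral => a _; rewrite /v'; ring.
rewrite E3 E1 Ev => h.
have : 0 <= c * (Rint (fun a => w a * FF k a) + x k.+1 * mD') by exact: mulr_ge0.
move=> H; move: h H.
move: (Rint (fun a => v a * w a * FF k a)) (Rint (fun a => w a * FF k a)) => A B.
rewrite mulrDr (mulrCA (x k.+1)).
exact: arith3.
Qed.

End Induct.

Lemma filter_prefix (R : realType) (f : nat -> \bar R) (P : pred nat) K :
  (forall i j, (i <= j)%N -> (j < K)%N -> P j -> P i) ->
  exists m, [/\ (m <= K)%N, (forall k, (k < m)%N -> P k) &
    (\sum_(0 <= k < K | P k) f k = \sum_(0 <= k < m) f k)%E].
Proof.
elim: K => [|K IH] hP.
  by exists 0%N; split => //; rewrite !big_geq.
have [PK|PK] := boolP (P K).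
  exists K.+1; split => // [k kK|].
    by apply: (hP k K) => //; rewrite -ltnS.
  rewrite big_nat_cond [RHS]big_nat_cond; apply: eq_bigl => k.
  case: (ltnP k K.+1) => /= kK; rewrite ?andbF ?andbT //.
  by apply: (hP k K) => //; rewrite -ltnS.
have [m [mK hm hs]] : exists m, [/\ (m <= K)%N, (forall k, (k < m)%N -> P k) &
    (\sum_(0 <= k < K | P k) f k = \sum_(0 <= k < m) f k)%E].
  by apply: IH => i j ij jK; apply: hP => //; apply: ltnW.
exists m; split => //; first exact: leqW.
by rewrite big_mkcond big_nat_recr //= (negbTE PK) adde0 -big_mkcond.
Qed.

Section Nonneg.
Variable R : realType.
Variable mu : {measure set R -> \bar R}.
Variable D : set R.
Hypothesis mD : measurable D.
Hypothesis muDfin : (mu D < +oo)%E.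
Hypothesis muD0 : (0 < mu D)%E.
Variable rho : R -> {measure set R -> \bar R}.
Hypothesis rho_fin : forall a x y : R, (rho a `[x, y]%classic < +oo)%E.
Hypothesis rho_mono : forall a b : R, a <= b -> forall A, measurable A -> (rho a A <= rho b A)%E.

Local Notation Rint f := (\int[mu]_(a in D) f a).
Local Notation e := (ee rho).

Definition GD : R -> R -> \bar R := fun t s =>
  (\int[mu]_(a in D) expeR (- rho a `]s, t]%classic))%E.

Lemma GDE t s : GD t s = (Rint (fun a => e a s t))%:E.
Proof.
rewrite /GD; under eq_integral do rewrite expeE //.
by apply: Rint_EFin => //; exact: gd_ee.
Qed.

Lemma sumG n (y : nat -> R) (s : nat -> R) t :
  (\sum_(0 <= j < n) (y j)%:E * GD t (s j))%E =
  (Rint (fun a => \sum_(0 <= j < n) y j * e a (s j) t))%:E.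
Proof.
under eq_bigr do rewrite GDE -EFinM.
rewrite sumEFin; congr EFin; rewrite Rint_sum //; last first.
  by move=> i; apply: gd_mul (gd_cst _ _) _; exact: gd_ee.
by apply: eq_bigr => j _; rewrite Rint_scale //; exact: gd_ee.
Qed.

Lemma GD_pn : preserves_nonnegativity GD.
Proof.
move=> T K x tt T0 htt hinc hyp u /andP[u0 uT].
have HK : forall k, (k < K)%N -> 0 <= Rint (FF rho x tt k).
  move=> k kK; have := hyp k kK; rewrite sumG lee_fin.
  by congr (_ <= _); apply: eq_Rintegral.
have [|m [mK hm ->]] := @filter_prefix R (fun k => (x k)%:E * GD u (tt k))%E
   (fun k => tt k <= u) K.
  by move=> i j ij jK h; apply: le_trans h; exact: (tt_le hinc ij jK).
case: m mK hm => [|k0] k0K hk0; first by rewrite big_geq.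
rewrite sumG lee_fin.
have tk0 : tt k0 <= u by exact: hk0.
have -> : \int[mu]_(a in D) (\sum_(0 <= j < k0.+1) x j * e a (tt j) u) =
    \int[mu]_(a in D) (e a (tt k0) u * FF rho x tt k0 a).
  apply: eq_Rintegral => a _; rewrite /FF mulr_sumr; apply: eq_big_nat => j /andP[_ jk].
  rewrite (ee_mul rho_fin a (s := tt j) (m := tt k0)) //; first ring.
  by apply: (tt_le hinc) => //.
apply: (QQ mD muDfin muD0 rho_fin rho_mono hinc HK) => //.
- exact: gd_ee.
- by move=> a b ab _; apply: ee_monoa => //; exact: ltW.
- by apply: Rintegral_ge0 => a _; exact/ltW/ee_gt0.
Qed.

End Nonneg.

Lemma expR_lip (R : realType) (x y : R) : 0 <= x -> 0 <= y ->
  `|expR (- x) - expR (- y)| <= `|x - y|.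
Proof.
wlog xy : x y / x <= y.
  move=> h x0 y0; have [|yx] := leP x y; first by move=> xy; exact: h.
  by rewrite distrC (distrC x); apply: h => //; exact: ltW.
move=> x0 y0.
have e1 : expR (- y) <= expR (- x) by rewrite ler_expR lerN2.
rewrite ger0_norm ?subr_ge0 // distrC ger0_norm ?subr_ge0 //.
have h1 := expR_ge1Dx (x - y).
have e2 : expR (- y) = expR (- x) * expR (x - y) by rewrite -expRD; congr expR; ring.
have ex1 : expR (- x) <= 1 by rewrite -expR0 ler_expR lerNl oppr0.
have ex0 : 0 < expR (- x) := expR_gt0 _.
have ed : 0 <= 1 - expR (x - y).
  by rewrite subr_ge0 -expR0 ler_expR subr_le0.
rewrite e2 -{1}(mulr1 (expR (- x))) -mulrBr.
apply: le_trans (_ : 1 * (1 - expR (x - y)) <= _).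
  by apply: ler_wpM2r.
rewrite mul1r; move: h1; rewrite -(opprB y x); move: (y - x) => w.
by rewrite lerBlDr addrC -lerBlDr.
Qed.

Section Window.
Variable R : realType.
Variable rho : R -> {measure set R -> \bar R}.
Hypothesis rho_fin : forall a x y : R, (rho a `[x, y]%classic < +oo)%E.
Hypothesis rho_atom : forall a x : R, rho a [set x] = 0%E.

Lemma window b x eta : 0 < eta -> exists2 d, 0 < d & rr rho b (x - d) (x + d) < eta.
Proof.
move=> eta0.
pose F n := `](x - n.+1%:R^-1), (x + n.+1%:R^-1)]%classic.
have mF n : measurable (F n) by exact: measurable_itv.
have capF : \bigcap_n F n = [set x].
  apply/seteqP; split => [y Fy|y]; last first.
    move=> -> n _.
    rewrite /F /= in_itv /=.
    by rewrite gtrDl oppr_lt0 invr_gt0 ltr0n lerDl invr_ge0 ler0n.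
  apply: contrapT => nyx.
  have d0 : 0 < `|y - x| by rewrite normr_gt0 subr_eq0; apply/eqP.
  have [N _ hN] := near_infty_natSinv_lt (PosNum d0).
  have := Fy N I; rewrite /F /= in_itv /= => /andP[h1 h2].
  have h := hN N (leqnn N); rewrite /= in h.
  have [yx|yx] := leP x y.
    rewrite ger0_norm ?subr_ge0 // in h.
    by move: h2; rewrite -lerBlDl leNgt h.
  rewrite ltr0_norm ?subr_lt0 // opprB in h.
  by move: h1; rewrite ltrBlDr -ltrBlDl ltNge (ltW h).
have F0 : (rho b (F 0%N) < +oo)%E.
  apply: le_lt_trans (rho_fin b (x - 1) (x + 1)); apply: le_measure; rewrite ?inE //.
  by apply: subset_itv; rewrite bnd_simp invr1.
have ni : nonincreasing_seq F.
  move=> n m nm; rewrite subsetEset /F; apply: subset_itv; rewrite bnd_simp.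
    by rewrite lerD2l lerN2 lef_pV2 ?posrE ?ltr0n // ler_nat ltnS.
  by rewrite lerD2l lef_pV2 ?posrE ?ltr0n // ler_nat ltnS.
have h := @nonincreasing_cvg_mu _ _ _ (rho b) F F0 mF
  (@bigcap_measurable _ _ F setT (ex_intro _ 0%N I) (fun k _ => mF k)) ni.
rewrite capF rho_atom in h.
have [N _ hN] := (cvgrPdist_lt _ _).1 (fine_cvg h) eta eta0.
exists N.+1%:R^-1; first by rewrite invr_gt0 ltr0n.
have := hN N (leqnn N); rewrite /= sub0r normrN ger0_norm // rr_ge0.
Qed.

End Window.

Lemma sub_window (R : realType) (s t s' t' d : R) : `|s' - s| < d -> `|t' - t| < d ->
  `]s', t']%classic `<=` `]s, t]%classic `|` (`]s - d, s + d]%classic `|` `]t - d, t + d]%classic).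
Proof.
move=> hs ht y /=; rewrite !in_itv /= => /andP[h1 h2].
move: hs ht; rewrite !ltr_distlC => /andP[hs1 hs2] /andP[ht1 ht2].
have [ys|ys] := leP y s.
  right; left; apply/andP; split; lra.
have [yt|yt] := leP y t.
  by left.
right; right; apply/andP; split; lra.
Qed.

Lemma sub_window2 (R : realType) (s t s' t' d : R) : `|s' - s| < d -> `|t' - t| < d ->
  `]s, t]%classic `<=` `]s', t']%classic `|` (`]s - d, s + d]%classic `|` `]t - d, t + d]%classic).
Proof.
move=> hs ht y /=; rewrite !in_itv /= => /andP[h1 h2].
move: hs ht; rewrite !ltr_distlC => /andP[hs1 hs2] /andP[ht1 ht2].
have [ys|ys] := leP y s'.
  right; left; apply/andP; split; lra.
have [yt|yt] := leP y t'.
  by left.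
right; right; apply/andP; split; lra.
Qed.

Lemma arith_norm (R : realType) (p q w : R) : p <= q + w -> q <= p + w -> `|p - q| <= w.
Proof. move=> h1 h2; rewrite ler_norml; apply/andP; split; lra. Qed.

Lemma arith_eps (R : realType) (eps m : R) : 0 < eps -> 0 <= m ->
  (eps / (2 * (m + 1)) + eps / (2 * (m + 1))) * m < eps.
Proof.
move=> e0 m0; have m1 : m + 1 != 0 by rewrite gt_eqF // ltr_wpDl.
rewrite (_ : _ + _ = eps / (m + 1)); last by field.
by rewrite mulrAC ltr_pdivrMr ?ltr_wpDl // ltr_pM2l // ltrDl ltr01.
Qed.

Section Cont.
Variable R : realType.
Variable mu : {measure set R -> \bar R}.
Variable D : set R.
Hypothesis mD : measurable D.
Hypothesis muDfin : (mu D < +oo)%E.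
Variable rho : R -> {measure set R -> \bar R}.
Hypothesis rho_fin : forall a x y : R, (rho a `[x, y]%classic < +oo)%E.
Hypothesis rho_mono : forall a b : R, a <= b -> forall A, measurable A -> (rho a A <= rho b A)%E.
Hypothesis rho_atom : forall a x : R, rho a [set x] = 0%E.
Variable Mb : R.
Hypothesis Dub : forall a, D a -> a <= Mb.

Local Notation Rint f := (\int[mu]_(a in D) f a).
Local Notation e := (ee rho).
Local Notation rr := (rr rho).

Definition GDr t s := Rint (fun a => e a s t).

Lemma rr_diff_le a s t s' t' d : `|s' - s| < d -> `|t' - t| < d ->
  rr a s' t' <= rr a s t + (rr a (s - d) (s + d) + rr a (t - d) (t + d)).
Proof.
move=> hs ht; rewrite -lee_fin !EFinD -!rhoE //.
apply: (@le_trans _ _ (rho a (`]s, t]%classic `|` (`]s - d, s + d]%classic `|` `]t - d, t + d]%classic)))).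
  by apply: le_measure; rewrite ?inE //; [apply: measurableU => //; exact: measurableU|exact: sub_window].
have mW : measurable (`]s - d, s + d]%classic `|` `]t - d, t + d]%classic).
  by apply: measurableU; exact: measurable_itv.
apply: le_trans (measureU2 (rho a) (measurable_itv _) mW) _.
by rewrite leeD2l //; apply: measureU2; exact: measurable_itv.
Qed.

Lemma rr_diff_le2 a s t s' t' d : `|s' - s| < d -> `|t' - t| < d ->
  rr a s t <= rr a s' t' + (rr a (s - d) (s + d) + rr a (t - d) (t + d)).
Proof.
move=> hs ht; rewrite -lee_fin !EFinD -!rhoE //.
apply: (@le_trans _ _ (rho a (`]s', t']%classic `|` (`]s - d, s + d]%classic `|` `]t - d, t + d]%classic)))).
  by apply: le_measure; rewrite ?inE //; [apply: measurableU => //; exact: measurableU|exact: sub_window2].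
have mW : measurable (`]s - d, s + d]%classic `|` `]t - d, t + d]%classic).
  by apply: measurableU; exact: measurable_itv.
apply: le_trans (measureU2 (rho a) (measurable_itv _) mW) _.
by rewrite leeD2l //; apply: measureU2; exact: measurable_itv.
Qed.

Lemma rr_diff a s t s' t' d : `|s' - s| < d -> `|t' - t| < d ->
  `|rr a s' t' - rr a s t| <= rr a (s - d) (s + d) + rr a (t - d) (t + d).
Proof.
move=> hs ht; apply: arith_norm; [exact: rr_diff_le|exact: rr_diff_le2].
Qed.

Lemma ee_diff a s t s' t' d : `|s' - s| < d -> `|t' - t| < d ->
  `|e a s' t' - e a s t| <= rr a (s - d) (s + d) + rr a (t - d) (t + d).
Proof.
move=> hs ht; apply: le_trans (rr_diff a hs ht).
by apply: expR_lip; exact: rr_ge0.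
Qed.

Lemma gd_norm f : gd D f -> gd D (fun a => `|f a|).
Proof.
move=> [mf [C hC]]; split; first exact: measurableT_comp.
by exists C => a Da; rewrite normr_id; exact: hC.
Qed.

Lemma gd_sub f g : gd D f -> gd D g -> gd D (fun a => f a - g a).
Proof.
move=> [mf [C hC]] [mg [C' hC']]; split; first exact: measurable_funB.
exists (C + C') => a Da; apply: le_trans (ler_normB _ _) _.
by apply: lerD; [exact: hC|exact: hC'].
Qed.

Lemma GDr_diff s t s' t' d : `|s' - s| < d -> `|t' - t| < d ->
  `|GDr t' s' - GDr t s| <= (rr Mb (s - d) (s + d) + rr Mb (t - d) (t + d)) * fine (mu D).
Proof.
move=> hs ht; rewrite /GDr -RintegralB //; try exact: gd_int (gd_ee _ _ _ _ _).
apply: le_trans; first apply: le_normr_Rintegral => //.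
  by apply: gd_int => //; apply: gd_sub; exact: gd_ee.
rewrite -Rint_cst //; apply: Rint_le => //.
- apply: gd_norm; apply: gd_sub; exact: gd_ee.
- exact: gd_cst.
move=> a Da; apply: le_trans (ee_diff a hs ht) _.
by apply: lerD; apply: rr_monoa => //; exact: Dub.
Qed.


Lemma GD_cont : continuous (fun p : R * R => GD mu D rho p.1 p.2).
Proof.
have -> : (fun p : R * R => GD mu D rho p.1 p.2) = (fun p => (GDr p.1 p.2)%:E).
  by apply: funext => p; rewrite GDE.
move=> p; apply: cvg_EFin; first exact: nearW.
apply/cvgrPdist_lt => eps eps0 /=.
set m := fine (mu D).
have m0 : 0 <= m by rewrite fine_ge0 // measure_ge0.
set eta := eps / (2 * (m + 1)).
have eta0 : 0 < eta by rewrite divr_gt0 // mulr_gt0 // ltr_wpDl.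
have [d1 d10 h1] := window rho_fin rho_atom Mb p.2 eta0.
have [d2 d20 h2] := window rho_fin rho_atom Mb p.1 eta0.
set d := Num.min d1 d2.
have d0 : 0 < d by rewrite lt_min d10 d20.
near=> q.
have [hq1 hq2] : ball p.1 d q.1 /\ ball p.2 d q.2.
  near: q; exists (ball p.1 d, ball p.2 d) => /=.
    by split; exact: nbhsx_ballx.
  by move=> [x1 x2] [/= hh1 hh2]; split.
rewrite -ball_normE /= in hq1 hq2.
rewrite distrC; apply: le_lt_trans (GDr_diff (d := d) _ _) _.
- by rewrite distrC; exact: hq2.
- by rewrite distrC; exact: hq1.
have w1 : rr Mb (p.2 - d) (p.2 + d) <= eta.
  apply: le_trans (ltW h1); apply: rr_subset => //; apply: subset_itv; rewrite bnd_simp.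
    by rewrite lerD2l lerN2 ge_min lexx.
  by rewrite lerD2l ge_min lexx.
have w2 : rr Mb (p.1 - d) (p.1 + d) <= eta.
  apply: le_trans (ltW h2); apply: rr_subset => //; apply: subset_itv; rewrite bnd_simp.
    by rewrite lerD2l lerN2 ge_min lexx orbT.
  by rewrite lerD2l ge_min lexx orbT.
apply: le_lt_trans (_ : (eta + eta) * m < eps).
  by apply: ler_wpM2r => //; exact: lerD.
exact: arith_eps.
Unshelve. all: by end_near.
Qed.

End Cont.

Lemma nd_itv_measurable (R : realType) (D : set R) (f : R -> R) : measurable D ->
  (forall x y z, D x -> D z -> x <= y -> y <= z -> D y) ->
  (forall x y, D x -> D y -> x <= y -> f x <= f y) -> measurable_fun D f.
Proof.
move=> mD iD f_nd.
apply: (measurability (@RGenCInfty.G R)) => [|/= _ [_] [r] -> <-].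
  exact: RGenCInfty.measurableE.
apply: is_interval_measurable => s t [Ds fs] [Dt ft] u /andP[su ut].
have Du : D u by exact: iD Ds Dt su ut.
split => //; move: fs; rewrite /= !in_itv /= !andbT => fs.
by apply: le_trans fs _; exact: f_nd.
Qed.

Lemma Rint_subsetT (R : realType) (mu : {measure set R -> \bar R}) (D : set R) (f : R -> R) :
  measurable D -> mu.-integrable setT (EFin \o f) -> (forall x, 0 <= f x) ->
  \int[mu]_(x in D) f x <= \int[mu]_(x in setT) f x.
Proof.
move=> mD intf f0.
have intD : mu.-integrable D (EFin \o f) by exact: integrableS intf.
rewrite -lee_fin /Rintegral !fineK; last 2 first.
- exact: integrable_fin_num.
- exact: integrable_fin_num.
apply: ge0_subset_integral => //.
- by case/integrableP: intf.
- by move=> x _; rewrite lee_fin.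
Qed.

Section Full.
Variable R : realType.
Variable mu : {measure set R -> \bar R}.
Variable rho : R -> {measure set R -> \bar R}.
Hypothesis mu_fin : forall a b : R, (mu `[a, b]%classic < +oo)%E.
Hypothesis rho_fin : forall a x y : R, (rho a `[x, y]%classic < +oo)%E.
Hypothesis rho_mono : forall a b : R, a <= b -> forall A, measurable A -> (rho a A <= rho b A)%E.
Hypothesis Gfin : forall t s : R, 0 <= s < t -> (Gamma mu rho t s < +oo)%E.

Local Notation e := (ee rho).
Definition DM (M : nat) : set R := `[(- (M%:R : R))%R, (M%:R : R)]%classic.
Definition Gr t s := fine (Gamma mu rho t s).
Definition GMr M t s := \int[mu]_(a in DM M) e a s t.

Lemma mDM M : measurable (DM M).
Proof. exact: measurable_itv. Qed.

Lemma GammaE t s : Gamma mu rho t s = (\int[mu]_(a in setT) (e a s t)%:E)%E.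
Proof. by rewrite /Gamma; apply: eq_integral => a _; rewrite expeE. Qed.

Lemma Gr_Rint t s : Gr t s = \int[mu]_(a in setT) e a s t.
Proof. by rewrite /Gr GammaE. Qed.

Lemma Gamma_ge0 t s : (0 <= Gamma mu rho t s)%E.
Proof. by rewrite GammaE; apply: integral_ge0 => a _; rewrite lee_fin ltW // ee_gt0. Qed.

Lemma Gint t s : 0 <= s < t -> mu.-integrable setT (EFin \o (fun a => e a s t)).
Proof.
move=> st; apply/integrableP; split.
  by apply/measurable_EFinP; exact: ee_measurable.
rewrite (eq_integral (fun a => (e a s t)%:E)); last first.
  by move=> a _; rewrite /= ger0_norm // ltW // ee_gt0.
by rewrite -GammaE; exact: Gfin.
Qed.

Lemma GrE t s : 0 <= s < t -> Gamma mu rho t s = (Gr t s)%:E.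
Proof.
move=> st; rewrite /Gr fineK // ge0_fin_numE ?Gamma_ge0 //; exact: Gfin.
Qed.

Lemma GME M t s : GammaM mu rho M t s = (GMr M t s)%:E.
Proof. by rewrite (_ : GammaM mu rho M t s = GD mu (DM M) rho t s) // (GDE (mDM M) (mu_fin _ _) rho_fin). Qed.

Lemma GMr_ge0 M t s : 0 <= GMr M t s.
Proof. by apply: Rintegral_ge0 => a _; rewrite ltW // ee_gt0. Qed.

Lemma Gr_ge0 t s : 0 <= Gr t s.
Proof. by rewrite /Gr fine_ge0 // Gamma_ge0. Qed.

Lemma GMr_le_Gr M t s : 0 <= s < t -> GMr M t s <= Gr t s.
Proof.
move=> st; rewrite Gr_Rint; apply: Rint_subsetT; first exact: mDM.
  exact: Gint.
by move=> x; rewrite ltW // ee_gt0.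
Qed.

Lemma GMr_nd M t u1 u2 : u1 <= u2 -> GMr M t u1 <= GMr M t u2.
Proof.
move=> u12.
have g1 := gd_ee (mDM M) rho_fin rho_mono u1 t.
have g2 := gd_ee (mDM M) rho_fin rho_mono u2 t.
apply: (Rint_le (mDM M) (mu_fin _ _) g1 g2).
by move=> a _; exact: ee_mono_s.
Qed.

Lemma Gr_nd t u1 u2 : 0 <= u1 -> u1 <= u2 -> u2 < t -> Gr t u1 <= Gr t u2.
Proof.
move=> u10 u12 u2t; rewrite !Gr_Rint; apply: le_Rintegral => //.
- apply: Gint; rewrite u10 /=; exact: le_lt_trans u2t.
- by apply: Gint; rewrite (le_trans u10 u12).
by move=> a _; exact: ee_mono_s.
Qed.

Lemma GMdiff M s t u : 0 <= u -> u < s -> s <= t ->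
  0 <= GMr M s u - GMr M t u <= Gr s u - Gr t u.
Proof.
move=> u0 us st.
have ut : u < t by exact: lt_le_trans st.
have gs := gd_ee (mDM M) rho_fin rho_mono u s.
have gt := gd_ee (mDM M) rho_fin rho_mono u t.
rewrite /GMr -RintegralB; [|exact: mDM|exact: (gd_int (mDM M) (mu_fin _ _) gs)|exact: (gd_int (mDM M) (mu_fin _ _) gt)].
rewrite !Gr_Rint -RintegralB //; [|apply: Gint; by rewrite u0|apply: Gint; by rewrite u0].
apply/andP; split.
  by apply: Rintegral_ge0 => a _; rewrite subr_ge0 ee_anti_t.
apply: Rint_subsetT; first exact: mDM.
  have -> : (EFin \o (fun a => e a u s - e a u t)) =
      ((EFin \o (fun a => e a u s)) \- (EFin \o (fun a => e a u t)))%E.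
    by apply: funext => a; rewrite /= EFinB.
  by apply: integrableB => //; apply: Gint; rewrite u0.
by move=> a; rewrite subr_ge0 ee_anti_t.
Qed.

End Full.

Section Full2.
Variable R : realType.
Variable mu : {measure set R -> \bar R}.
Variable rho : R -> {measure set R -> \bar R}.
Hypothesis mu_fin : forall a b : R, (mu `[a, b]%classic < +oo)%E.
Hypothesis rho_fin : forall a x y : R, (rho a `[x, y]%classic < +oo)%E.
Hypothesis rho_mono : forall a b : R, a <= b -> forall A, measurable A -> (rho a A <= rho b A)%E.
Hypothesis Gfin : forall t s : R, 0 <= s < t -> (Gamma mu rho t s < +oo)%E.

Local Notation Gr := (Gr mu rho).
Local Notation GMr := (GMr mu rho).
Local Notation leb := (@lebesgue_measure R).

Lemma GMr_meas M t (A : set R) : measurable A -> measurable_fun A (fun u => GMr M t u).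
Proof.
move=> mA; apply: nondecreasing_measurable => // u1 u2 u12.
exact: (GMr_nd mu_fin rho_fin rho_mono).
Qed.

Lemma Gr_meas (t a b : R) : 0 <= a -> b <= t -> measurable_fun `[a, b[%classic (fun u => Gr t u).
Proof.
move=> a0 bt; apply: nd_itv_measurable; first exact: measurable_itv.
  move=> x y z; rewrite /= !in_itv /= => /andP[ax _] /andP[_ zb] xy yz.
  by rewrite (le_trans ax xy) (le_lt_trans yz zb).
move=> x y; rewrite /= !in_itv /= => /andP[ax xb] /andP[ay yb] xy.
apply: (Gr_nd rho_fin rho_mono Gfin) => //; first exact: le_trans ax.
exact: lt_le_trans yb bt.
Qed.

Lemma sq_le (x y : R) : 0 <= x -> x <= y -> x ^+ 2 <= y ^+ 2.
Proof. by move=> x0 xy; rewrite lerXn2r // nnegrE // (le_trans x0 xy). Qed.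

Lemma KM_le M (t s : R) : 0 <= s -> s <= t ->
  (Kquant (GammaM mu rho M) t s <= Kquant (Gamma mu rho) t s)%E.
Proof.
move=> s0 st; rewrite /Kquant; apply: leeD.
- apply: ge0_le_integral; first exact: measurable_itv.
  + by move=> u _; exact: sqre_ge0.
  + apply: (eq_measurable_fun (EFin \o (fun u => GMr M t u ^+ 2))).
      by move=> u _; rewrite (GME mu_fin rho_fin rho_mono) -EFin_expe.
    apply: (iffRL (measurable_EFinP _ _)); apply: measurable_funX; apply: GMr_meas.
    exact: measurable_itv.
  + apply: (eq_measurable_fun (EFin \o (fun u => Gr t u ^+ 2))).
      move=> u; rewrite inE => hu.
      have /andP[su ut] : s <= u < t by move: hu; rewrite /= in_itv.
      by rewrite (GrE rho_fin Gfin) -?EFin_expe // (le_trans s0 su).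
    apply: (iffRL (measurable_EFinP _ _)); apply: measurable_funX; exact: Gr_meas.
  + move=> u hu.
    have /andP[su ut] : s <= u < t by move: hu; rewrite /= in_itv.
    have u0 : 0 <= u by exact: le_trans su.
    rewrite (GME mu_fin rho_fin rho_mono) (GrE rho_fin Gfin) ?u0 // -!EFin_expe lee_fin.
    apply: sq_le; first exact: GMr_ge0.
    by apply: (GMr_le_Gr rho_fin rho_mono Gfin) => //; rewrite u0.
- apply: ge0_le_integral; first exact: measurable_itv.
  + by move=> u _; exact: sqre_ge0.
  + apply: (eq_measurable_fun (EFin \o (fun u => (GMr M t u - GMr M s u) ^+ 2))).
      by move=> u _; rewrite !(GME mu_fin rho_fin rho_mono) -EFinB -EFin_expe.
    apply: (iffRL (measurable_EFinP _ _)); apply: measurable_funX; apply: measurable_funB;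
      apply: GMr_meas; exact: measurable_itv.
  + apply: (eq_measurable_fun (EFin \o (fun u => (Gr t u - Gr s u) ^+ 2))).
      move=> u; rewrite inE => hu.
      have /andP[u0 us] : 0 <= u < s by move: hu; rewrite /= in_itv.
      rewrite !(GrE rho_fin Gfin) -?EFin_expe -?EFinB // u0 //=.
      exact: lt_le_trans st.
    apply: (iffRL (measurable_EFinP _ _)); apply: measurable_funX; apply: measurable_funB; exact: Gr_meas.
  + move=> u hu.
    have /andP[u0 us] : 0 <= u < s by move: hu; rewrite /= in_itv.
    have ut : u < t by exact: lt_le_trans st.
    rewrite !(GME mu_fin rho_fin rho_mono) !(GrE rho_fin Gfin) ?u0 // -!EFinB -!EFin_expe lee_fin.
    have /andP[h1 h2] := GMdiff mu_fin rho_fin rho_mono Gfin M u0 us st.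
    by rewrite -(opprB (GMr M s u)) -(opprB (Gr s u)) !sqrrN; apply: sq_le.
Qed.

End Full2.

Section Full3.
Variable R : realType.
Variable mu : {measure set R -> \bar R}.
Variable rho : R -> {measure set R -> \bar R}.
Hypothesis mu_fin : forall a b : R, (mu `[a, b]%classic < +oo)%E.
Hypothesis rho_fin : forall a x y : R, (rho a `[x, y]%classic < +oo)%E.
Hypothesis rho_mono : forall a b : R, a <= b -> forall A, measurable A -> (rho a A <= rho b A)%E.
Hypothesis Gfin : forall t s : R, 0 <= s < t -> (Gamma mu rho t s < +oo)%E.

Local Notation Gr := (Gr mu rho).
Local Notation GMr := (GMr mu rho).
Local Notation e := (ee rho).

Lemma DM_nd : {homo (@DM R) : n m / (n <= m)%N >-> (n <= m)%O}.
Proof.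
move=> n m nm; rewrite subsetEset /DM; apply: subset_itv; rewrite bnd_simp.
  by rewrite lerN2 ler_nat.
by rewrite ler_nat.
Qed.

Lemma DM_cup : \bigcup_n (@DM R n) = setT.
Proof.
apply/seteqP; split => // x _.
exists (Num.trunc `|x|).+1 => //.
rewrite /DM /= in_itv /= -ler_norml; apply: ltW.
exact: truncnS_gt.
Qed.

Lemma GMr_cvg t s : 0 <= s < t -> (fun n => GMr n t s) @ \oo --> Gr t s.
Proof.
move=> st.
have h := @ge0_nondecreasing_set_cvg_integral _ _ _ (@DM R) (EFin \o (fun a => e a s t)) mu
  DM_nd (@mDM R) (fun i => iffRL (measurable_EFinP _ _) (ee_measurable rho_fin rho_mono s t (@mDM R i)))
  (fun i x _ => ltW (ee_gt0 rho x s t) : (0 <= (e x s t)%:E)%E).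
rewrite DM_cup in h.
have E : (\int[mu]_(x in setT) (EFin \o (fun a => e a s t)) x)%E = (Gr t s)%:E.
  by rewrite -(GrE rho_fin Gfin) // GammaE.
rewrite E in h.
exact: (fine_cvg h).
Qed.

Lemma L2conv (t : R) : 0 <= t ->
  (\int[@lebesgue_measure R]_(u in `[0%R, t[%classic) (Gamma mu rho t u) ^+ 2 < +oo)%E ->
  (fun M : nat => (\int[@lebesgue_measure R]_(s in `[0%R, t[%classic)
             (Gamma mu rho t s - GammaM mu rho M t s) ^+ 2)%E) @ \oo --> 0%E.
Proof.
move=> t0 Hint.
have mD : measurable (`[0%R, t[%classic : set R) by exact: measurable_itv.
have inD u : `[0%R, t[%classic u -> 0 <= u < t by rewrite /= in_itv.
have fE n u : `[0%R, t[%classic u -> ((Gamma mu rho t u - GammaM mu rho n t u) ^+ 2)%E =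
    ((Gr t u - GMr n t u) ^+ 2)%:E.
  move=> /inD hu; rewrite (GrE rho_fin Gfin) // (GME mu_fin rho_fin rho_mono).
  by rewrite -EFinB -EFin_expe.
have gE u : `[0%R, t[%classic u -> ((Gamma mu rho t u) ^+ 2)%E = ((Gr t u) ^+ 2)%:E.
  by move=> /inD hu; rewrite (GrE rho_fin Gfin) // -EFin_expe.
have mG : measurable_fun `[0%R, t[%classic (fun u => (Gamma mu rho t u) ^+ 2)%E.
  apply: (eq_measurable_fun (EFin \o (fun u => Gr t u ^+ 2))).
    by move=> u; rewrite inE => hu; rewrite gE.
  apply: (iffRL (measurable_EFinP _ _)); apply: measurable_funX.
  exact: (Gr_meas rho_fin rho_mono Gfin).
rewrite -(integral0 (@lebesgue_measure R) `[0%R, t[%classic).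
apply: (@dominated_cvg _ _ _ (@lebesgue_measure R) _ mD
  (fun n s => ((Gamma mu rho t s - GammaM mu rho n t s) ^+ 2)%E) (cst 0%E)
  (fun u => ((Gamma mu rho t u) ^+ 2)%E)).
- move=> n; apply: (eq_measurable_fun (EFin \o (fun u => (Gr t u - GMr n t u) ^+ 2))).
    by move=> u; rewrite inE => hu; rewrite fE.
  apply: (iffRL (measurable_EFinP _ _)); apply: measurable_funX; apply: measurable_funB.
    exact: (Gr_meas rho_fin rho_mono Gfin).
  exact: (GMr_meas mu_fin rho_fin rho_mono).
- move=> u hu.
  rewrite (_ : (fun n => _) = (fun n => ((Gr t u - GMr n t u) ^+ 2)%:E)); last first.
    by apply: funext => n; rewrite fE.
  apply: cvg_EFin; first exact: nearW.
  rewrite /comp /=.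
  have hh : (fun n => Gr t u - GMr n t u) @ \oo --> (0 : R).
    rewrite -(subrr (Gr t u)); apply: cvgB; first exact: cvg_cst.
    exact: GMr_cvg.
  under eq_fun do rewrite expr2.
  rewrite -(mulr0 (0 : R)); exact: (cvgM hh hh).
- by move=> u hu; rewrite gE.
- apply/integrableP; split => //.
  apply: le_lt_trans Hint; rewrite le_eqVlt; apply/orP; left; apply/eqP.
  by apply: eq_integral => u _; rewrite gee0_abs // sqre_ge0.
- move=> n u hu; rewrite gee0_abs ?sqre_ge0 // fE // gE // lee_fin.
  have /inD [hu'] := hu.
  have h1 := GMr_le_Gr rho_fin rho_mono Gfin n hu'.
  apply: sq_le; first by rewrite subr_ge0.
  by rewrite lerBlDr lerDl; exact: GMr_ge0.
Qed.

End Full3.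

Unset Implicit Arguments.

Theorem mainTheorem7 (R : realType) (mu : {measure set R -> \bar R})
  (rho : R -> {measure set R -> \bar R}) :
  cm_double_kernel mu rho ->
  (forall (a x : R), rho a [set x] = 0%E) ->
  condK (Gamma mu rho) ->
  [/\ condK (Gamma mu rho),
      (forall M : nat, (0 < M)%N -> (0 < mu `[(- (M%:R : R))%R, (M%:R : R)]%classic)%E ->
         condP (GammaM mu rho M)),
      (forall t : R, 0 <= t ->
         (fun M : nat => (\int[@lebesgue_measure R]_(s in `[0%R, t[%classic)
             (Gamma mu rho t s - GammaM mu rho M t s) ^+ 2)%E)
           @ \oo --> 0%E) &
      (forall T : R, exists eta : R, exists gam : R,
         [/\ 0 < eta, 0 < gam, gam <= 1/2 &
           forall (M : nat) (t s : R), (0 < M)%N -> 0 <= s -> s <= t -> t <= T ->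
             (Kquant (GammaM mu rho M) t s <= (eta * (t - s) `^ (2 * gam))%:E)%E])].
Proof.
move=> [mu_fin rho_neg rho_fin rho_mono Gfin] rho_atom hK.
split => //.
- move=> M M0 muD0.
  have mD : measurable (DM M : set R) by exact: mDM.
  have muDfin : (mu (DM M) < +oo)%E by exact: mu_fin.
  have Dub : forall a, DM M a -> a <= (M%:R : R).
    by move=> a; rewrite /DM /= in_itv /= => /andP[].
  split.
  + apply: continuous_subspaceT.
    exact: (GD_cont mD muDfin rho_fin rho_mono rho_atom Dub).
  + move=> s s0; rewrite /GammaM.
    under eq_integral do rewrite set_itvoc0 measure0 oppe0 expeR0.
    rewrite (integral_cst mu mD 1%E).
    by rewrite mul1e; split => //; exact: mu_fin.
  + exact: (GD_pn mD muDfin muD0 rho_fin rho_mono).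
  + move=> s t1 t2 s0 st1 t12.
    rewrite !(GME mu_fin rho_fin rho_mono M) lee_fin.
    apply: (Rint_le mD muDfin (gd_ee mD rho_fin rho_mono s t2) (gd_ee mD rho_fin rho_mono s t1)).
    by move=> a _; exact: ee_anti_t.
- move=> t t0; apply: (L2conv mu_fin rho_fin rho_mono Gfin t0).
  have [eta [gam [_ _ _ hb]]] := hK t.
  have := hb t 0 (lexx 0) t0 (lexx t).
  rewrite /Kquant => h.
  apply: le_lt_trans (le_trans _ h) (ltry _).
  rewrite leeDl //; apply: integral_ge0 => u _; exact: sqre_ge0.
- move=> T; have [eta [gam [e0 g0 g1 hb]]] := hK T.
  exists eta, gam; split => // M t s M0 s0 st tT.
  apply: le_trans (hb t s s0 st tT).
  exact: (KM_le mu_fin rho_fin rho_mono Gfin).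
Qed.
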